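(* Let $n \ge 1$, let $F$ be an $n$-perturbation on $H^2(\mathbb{D})$ and $S_n = M_z + F$. If $f \in H^2(\mathbb{D})$ is a nonzero function, then the closed subspace $[f]_{S_n} = \overline{\{p(S_n) f : p \in \mathbb{C}[z]\}}$ contains a nonzero closed $M_z$-invariant subspace of $H^2(\mathbb{D})$.
   Context: $H^2(\mathbb{D})$ is the Hardy space on the open unit disc and $M_z$ the unilateral shift on it. All operators are bounded. A linear operator $F$ on $H^2(\mathbb{D})$ is an $n$-perturbation if (a) $Fz^m = 0$ for all $m \ge n$; (b) $F(z^m H^2(\mathbb{D})) \subseteq z^{m+1}\mathbb{C}[z]$ for all $m \ge 0$; and (c) $M_z + F$ is left-invertible. *)

(* Defs.v *)
(* H^2(D) is modelled by its coefficient space l^2(N; C): f = sum_k f_k z^k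
   corresponds to the sequence k |-> f_k. Under this unitary identification
   z^m is the unit vector e_m, M_z is the unilateral shift, C[z] is the set of
   finitely supported sequences and z^m H^2 is the set of l^2 sequences
   vanishing below index m. *)
From Stdlib Require Import Reals.
From Coquelicot Require Import Coquelicot.
Open Scope R_scope.

Definition seqC := nat -> C.

Definition H2 (x : seqC) : Prop := ex_series (fun k => (Cmod (x k)) ^ 2).

Definition H2norm (x : seqC) : R := sqrt (Series (fun k => (Cmod (x k)) ^ 2)).

Definition seq0 : seqC := fun _ => (RtoC 0).
Definition seq_add (x y : seqC) : seqC := fun k => Cplus (x k) (y k).
Definition seq_scal (a : C) (x : seqC) : seqC := fun k => Cmult a (x k).
Definition seq_sub (x y : seqC) : seqC := fun k => Cminus (x k) (y k).

Definition zpow (m : nat) : seqC := fun k => if Nat.eqb k m then (RtoC 1) else (RtoC 0).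

Definition Mz (x : seqC) : seqC :=
  fun k => match k with O => (RtoC 0) | S k' => x k' end.

Definition is_poly (x : seqC) : Prop := exists N, forall k, (N <= k)%nat -> x k = (RtoC 0).

Definition in_zmH2 (m : nat) (x : seqC) : Prop := H2 x /\ forall k, (k < m)%nat -> x k = (RtoC 0).

Definition in_zmCz (m : nat) (x : seqC) : Prop := is_poly x /\ forall k, (k < m)%nat -> x k = (RtoC 0).

Definition bounded_op (T : seqC -> seqC) : Prop :=
  (forall x, H2 x -> H2 (T x)) /\
  (forall a x y, H2 x -> H2 y -> T (seq_add (seq_scal a x) y) = seq_add (seq_scal a (T x)) (T y)) /\
  (exists M, forall x, H2 x -> H2norm (T x) <= M * H2norm x).

Definition op_add (T U : seqC -> seqC) : seqC -> seqC := fun x => seq_add (T x) (U x).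

Definition left_invertible (T : seqC -> seqC) : Prop :=
  exists L, bounded_op L /\ forall x, H2 x -> L (T x) = x.

Definition n_perturbation (n : nat) (F : seqC -> seqC) : Prop :=
  bounded_op F /\
  (forall m, (n <= m)%nat -> F (zpow m) = seq0) /\
  (forall m x, in_zmH2 m x -> in_zmCz (S m) (F x)) /\
  left_invertible (op_add Mz F).

(* p(T) f for p = c_0 + c_1 z + ... given as the coefficient list [c_0; c_1; ...]
   (Horner scheme: p(T) f = c_0 f + T (p'(T) f)) *)
Fixpoint poly_app (p : list C) (T : seqC -> seqC) (f : seqC) : seqC :=
  match p with
  | nil => seq0
  | cons c p' => seq_add (seq_scal c f) (T (poly_app p' T f))
  end.

Definition H2closure (A : seqC -> Prop) (x : seqC) : Prop :=
  H2 x /\ forall eps, 0 < eps -> exists y, A y /\ H2norm (seq_sub x y) < eps.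

Definition cyclic_subspace (T : seqC -> seqC) (f : seqC) : seqC -> Prop :=
  H2closure (fun y => exists p, y = poly_app p T f).

Definition closed_subspace (M : seqC -> Prop) : Prop :=
  (forall x, M x -> H2 x) /\ M seq0 /\
  (forall x y, M x -> M y -> M (seq_add x y)) /\
  (forall a x, M x -> M (seq_scal a x)) /\
  (forall x, H2closure M x -> M x).

(* Main.v *)
Require Import Defs.
From Stdlib Require Import Reals Lra Lia FunctionalExtensionality List.
From Coquelicot Require Import Coquelicot.
Open Scope R_scope.

Lemma ex0 : ex_series (fun _ : nat => 0).
Proof.
  assert (H : ex_series (fun n => (1/2)^n)).
  { eexists. apply is_series_geom. rewrite Rabs_pos_eq; lra. }
  apply (ex_series_ext (fun n => (1/2)^n * 0)). intros; simpl; ring.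
  apply ex_series_scal_r. exact H.
Qed.

Definition N2 (x : seqC) : R := Series (fun k => (Cmod (x k)) ^ 2).

Lemma Series_nonneg' (a : nat -> R) : (forall k, 0 <= a k) -> 0 <= Series a.
Proof.
  intros H. destruct (Classical_Prop.classic (ex_series a)) as [E|E].
  - replace 0 with (Series (fun k => 0 * a k)).
    + apply Series_le; [intros k; specialize (H k); lra | exact E].
    + rewrite Series_scal_l; ring.
  - unfold Series. 
    destruct (Lim_seq (sum_n a)) eqn:Hl; simpl; try lra.
    exfalso; apply E. exists r. unfold is_series.
    assert (ex_lim_seq (sum_n a)).
    { apply ex_lim_seq_incr. intros m. rewrite sum_Sn. unfold plus; simpl.
      specialize (H (S m)). lra. }
    apply Lim_seq_correct in H0. rewrite Hl in H0. exact H0.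
Qed.

Lemma N2_nonneg x : 0 <= N2 x.
Proof. apply Series_nonneg'. intros; apply pow2_ge_0. Qed.

Lemma norm_lt1 x eps : 0 < eps -> H2norm x < eps -> N2 x < eps ^ 2.
Proof.
  intros He H. unfold H2norm in H. fold (N2 x) in H.
  pose proof (N2_nonneg x). rewrite <- (sqrt_sqrt (N2 x)) by lra.
  pose proof (sqrt_pos (N2 x)). nra.
Qed.

Lemma norm_lt2 x eps : 0 < eps -> N2 x < eps ^ 2 -> H2norm x < eps.
Proof.
  intros He H. unfold H2norm. fold (N2 x).
  rewrite <- (sqrt_pow2 eps) by lra. apply sqrt_lt_1_alt. pose proof (N2_nonneg x). lra.
Qed.

Lemma H2_bound2 (z u v : seqC) : H2 u -> H2 v ->
  (forall k, Cmod (z k) <= Cmod (u k) + Cmod (v k)) ->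
  H2 z /\ N2 z <= 2 * N2 u + 2 * N2 v.
Proof.
  intros Hu Hv Hk.
  assert (Hp : forall k, 0 <= Cmod (z k) ^ 2 <= 2 * Cmod (u k) ^2 + 2 * Cmod (v k) ^ 2).
  { intros k. specialize (Hk k). pose proof (Cmod_ge_0 (z k)).
    pose proof (Cmod_ge_0 (u k)). pose proof (Cmod_ge_0 (v k)). assert (0 <= (Cmod (u k) + Cmod (v k) - Cmod (z k)) * (Cmod (u k) + Cmod (v k) + Cmod (z k))) by (apply Rmult_le_pos; lra). pose proof (pow2_ge_0 (Cmod (u k) - Cmod (v k))). split; [apply pow2_ge_0|nra]. }
  assert (Hs : ex_series (fun k => 2 * Cmod (u k) ^2 + 2 * Cmod (v k) ^ 2)).
  { apply (ex_series_ext (fun k => plus (Cmod (u k) ^2 * 2) (Cmod (v k) ^ 2 * 2))).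
    intros; unfold plus; simpl; ring.
    apply (@ex_series_plus R_AbsRing R_NormedModule (fun k => Cmod (u k) ^2 * 2) (fun k => Cmod (v k) ^ 2 * 2)); apply ex_series_scal_r; assumption. }
  split.
  - unfold H2. apply (@ex_series_le R_AbsRing R_CompleteNormedModule _ (fun k => 2 * Cmod (u k) ^2 + 2 * Cmod (v k) ^ 2)); [|exact Hs].
    intros k. unfold norm; simpl. unfold abs; simpl. rewrite Rabs_pos_eq; apply Hp.
  - unfold N2. eapply Rle_trans. apply Series_le. exact Hp. exact Hs.
    rewrite Series_plus. rewrite !Series_scal_l. lra.
    apply (ex_series_ext (fun k => Cmod (u k) ^2 * 2)). intros; simpl; ring. apply ex_series_scal_r; assumption.
    apply (ex_series_ext (fun k => Cmod (v k) ^2 * 2)). intros; simpl; ring. apply ex_series_scal_r; assumption.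
Qed.

Lemma H2_bound1 (z u : seqC) (c : R) : 0 <= c -> H2 u ->
  (forall k, Cmod (z k) <= c * Cmod (u k)) ->
  H2 z /\ N2 z <= c ^ 2 * N2 u.
Proof.
  intros Hc Hu Hk.
  assert (Hp : forall k, 0 <= Cmod (z k) ^ 2 <= c^2 * Cmod (u k) ^2).
  { intros k. specialize (Hk k). pose proof (Cmod_ge_0 (z k)).
    pose proof (Cmod_ge_0 (u k)). nra. }
  assert (Hs : ex_series (fun k => c^2 * Cmod (u k) ^2)).
  { apply (ex_series_ext (fun k => Cmod (u k) ^2 * c^2)). intros; simpl; ring.
    apply ex_series_scal_r; assumption. }
  split.
  - unfold H2. apply (@ex_series_le R_AbsRing R_CompleteNormedModule _ (fun k => c^2 * Cmod (u k) ^2)); [|exact Hs].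
    intros k. unfold norm; simpl. unfold abs; simpl. rewrite Rabs_pos_eq; apply Hp.
  - unfold N2. eapply Rle_trans. apply Series_le. exact Hp. exact Hs.
    rewrite Series_scal_l. lra.
Qed.

Lemma coord_le (x : seqC) k : H2 x -> Cmod (x k) ^ 2 <= N2 x.
Proof.
  intros Hx. unfold N2. rewrite (Series_incr_n _ (S k)) by (lia || exact Hx).
  cbv [pred].
  assert (0 <= Series (fun k0 : nat => Cmod (x (S k + k0)%nat) ^ 2)) by (apply Series_nonneg'; intros; apply pow2_ge_0).
  destruct k. simpl sum_f_R0. lra.
  rewrite tech5. assert (0 <= sum_f_R0 (fun k0 : nat => Cmod (x k0) ^ 2) k).
  { apply cond_pos_sum. intros; apply pow2_ge_0. }
  lra.
Qed.

Lemma Mz_N2 x : H2 x -> H2 (Mz x) /\ N2 (Mz x) = N2 x.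
Proof.
  intros Hx. split.
  - unfold H2. apply ex_series_incr_1. exact Hx.
  - unfold N2. rewrite Series_incr_1_aux. reflexivity. simpl. rewrite Cmod_0. ring.
Qed.

Lemma H2_seq0 : H2 seq0.
Proof. unfold H2, seq0. apply (ex_series_ext (fun _ => 0)). intros; rewrite Cmod_0; simpl; ring. apply ex0. Qed.

Lemma N2_seq0 : N2 seq0 = 0.
Proof. unfold N2, seq0. transitivity (Series (fun _ : nat => 0 * 1)).
  apply Series_ext. intros; rewrite Cmod_0; ring. rewrite Series_scal_l; ring. Qed.

Lemma H2_zpow m : H2 (zpow m).
Proof.
  unfold H2. apply (ex_series_incr_n _ (S m)).
  apply (ex_series_ext (fun _ => 0)). intros k. unfold zpow.
  replace (Nat.eqb (S m + k) m) with false. rewrite Cmod_0; simpl; ring.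
  symmetry; apply Nat.eqb_neq; lia. apply ex0.
Qed.

Lemma H2_add x y : H2 x -> H2 y -> H2 (seq_add x y).
Proof. intros; apply (H2_bound2 _ x y); auto. intros; apply Cmod_triangle. Qed.

Lemma Cmod_sub a b : Cmod (a - b) <= Cmod a + Cmod b.
Proof. unfold Cminus. rewrite <- (Cmod_opp b). apply Cmod_triangle. Qed.

Lemma H2_sub x y : H2 x -> H2 y -> H2 (seq_sub x y).
Proof. intros; apply (H2_bound2 _ x y); auto. intros; apply Cmod_sub. Qed.

Lemma H2_scal a x : H2 x -> H2 (seq_scal a x).
Proof. intros; apply (H2_bound1 _ x (Cmod a)); auto. apply Cmod_ge_0.
  intros; unfold seq_scal; rewrite Cmod_mult; lra. Qed.

Lemma lin0 T : bounded_op T -> T seq0 = seq0.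
Proof.
  intros [HT [Lin _]]. specialize (Lin 1%C seq0 seq0 H2_seq0 H2_seq0).
  assert (E : seq_add (seq_scal 1%C seq0) seq0 = seq0).
  { apply functional_extensionality; intros k; unfold seq_add, seq_scal, seq0; ring. }
  rewrite E in Lin. apply functional_extensionality; intros k.
  apply (f_equal (fun g => g k)) in Lin. unfold seq_add, seq_scal in Lin.
  set (c := T seq0 k) in *. change (c = 0%C).
  replace c with ((1 * c + c) - c)%C at 1 by ring. rewrite <- Lin. ring.
Qed.

Definition Sop F := op_add Mz F.

Lemma S_H2 F x : bounded_op F -> H2 x -> H2 (Sop F x).
Proof. intros [HF _] Hx. apply H2_add. apply Mz_N2; auto. auto. Qed.

Lemma S_lin F a x y : bounded_op F -> H2 x -> H2 y ->
  Sop F (seq_add (seq_scal a x) y) = seq_add (seq_scal a (Sop F x)) (Sop F y).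
Proof.
  intros [HF [Lin _]] Hx Hy. unfold Sop, op_add. rewrite Lin by auto.
  apply functional_extensionality; intros k. unfold seq_add, seq_scal, Mz.
  destruct k; ring.
Qed.

Lemma S0 F : bounded_op F -> Sop F seq0 = seq0.
Proof. intros HF. unfold Sop, op_add. rewrite (lin0 F HF).
  apply functional_extensionality; intros k. unfold seq_add, Mz, seq0. destruct k; ring. Qed.

Lemma S_add F x y : bounded_op F -> H2 x -> H2 y ->
  Sop F (seq_add x y) = seq_add (Sop F x) (Sop F y).
Proof.
  intros HF Hx Hy. replace (seq_add x y) with (seq_add (seq_scal 1%C x) y).
  rewrite S_lin by auto. apply functional_extensionality; intros k; unfold seq_add, seq_scal; ring.
  apply functional_extensionality; intros k; unfold seq_add, seq_scal; ring.
Qed.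

Lemma S_scal F a x : bounded_op F -> H2 x ->
  Sop F (seq_scal a x) = seq_scal a (Sop F x).
Proof.
  intros HF Hx. replace (seq_scal a x) with (seq_add (seq_scal a x) seq0).
  rewrite S_lin by (auto using H2_seq0). rewrite S0 by auto.
  apply functional_extensionality; intros k; unfold seq_add, seq_scal, seq0; ring.
  apply functional_extensionality; intros k; unfold seq_add, seq_scal, seq0; ring.
Qed.

Lemma S_sub F x y : bounded_op F -> H2 x -> H2 y ->
  Sop F (seq_sub x y) = seq_sub (Sop F x) (Sop F y).
Proof.
  intros HF Hx Hy. replace (seq_sub x y) with (seq_add (seq_scal (-1)%C y) x).
  rewrite S_lin by auto. apply functional_extensionality; intros k; unfold seq_add, seq_sub, seq_scal; ring.
  apply functional_extensionality; intros k; unfold seq_add, seq_sub, seq_scal; ring.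
Qed.

Lemma F_N2 F : bounded_op F -> exists K, 0 <= K /\ forall x, H2 x -> N2 (F x) <= K * N2 x.
Proof.
  intros [HF [_ [M HM]]]. exists (M^2). split. apply pow2_ge_0.
  intros x Hx. specialize (HM x Hx). unfold H2norm in HM. fold (N2 x) (N2 (F x)) in HM.
  pose proof (N2_nonneg x). pose proof (N2_nonneg (F x)).
  pose proof (sqrt_pos (N2 x)). pose proof (sqrt_pos (N2 (F x))).
  rewrite <- (sqrt_sqrt (N2 x)) by lra. rewrite <- (sqrt_sqrt (N2 (F x))) by lra.
  assert (0 <= (M * sqrt (N2 x) - sqrt (N2 (F x))) * (M * sqrt (N2 x) + sqrt (N2 (F x)))) by (apply Rmult_le_pos; nra).
  nra.
Qed.

Lemma S_N2 F : bounded_op F -> exists K, 0 <= K /\ forall x, H2 x -> N2 (Sop F x) <= K * N2 x.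
Proof.
  intros HF. destruct (F_N2 F HF) as [K [HK HFK]]. exists (2 + 2 * K). split. lra.
  intros x Hx. destruct (Mz_N2 x Hx) as [HM EM].
  destruct HF as [HF' _].
  destruct (H2_bound2 (Sop F x) (Mz x) (F x) HM (HF' x Hx)) as [_ Hb].
  intros k; apply Cmod_triangle.
  specialize (HFK x Hx). nra.
Qed.

Fixpoint padd (p q : list C) : list C :=
  match p, q with
  | nil, q => q
  | p, nil => p
  | c :: p', d :: q' => (c + d)%C :: padd p' q'
  end.

Lemma PA_H2 F f p : bounded_op F -> H2 f -> H2 (poly_app p (Sop F) f).
Proof.
  intros HF Hf. induction p as [|c p IH]; simpl. apply H2_seq0.
  apply H2_add. apply H2_scal; auto. apply S_H2; auto.
Qed.

Lemma PA_add F f p q : bounded_op F -> H2 f ->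
  seq_add (poly_app p (Sop F) f) (poly_app q (Sop F) f) = poly_app (padd p q) (Sop F) f.
Proof.
  intros HF Hf. revert q. induction p as [|c p IH]; intros q.
  - simpl. apply functional_extensionality; intros k; unfold seq_add, seq0; ring.
  - destruct q as [|d q].
    + simpl. apply functional_extensionality; intros k; unfold seq_add, seq0; ring.
    + simpl. rewrite <- IH. rewrite S_add by (auto using PA_H2).
      apply functional_extensionality; intros k; unfold seq_add, seq_scal; ring.
Qed.

Lemma PA_scal F f a p : bounded_op F -> H2 f ->
  seq_scal a (poly_app p (Sop F) f) = poly_app (map (Cmult a) p) (Sop F) f.
Proof.
  intros HF Hf. induction p as [|c p IH]; simpl.
  - apply functional_extensionality; intros k; unfold seq_scal, seq0; ring.
  - rewrite <- IH. rewrite S_scal by (auto using PA_H2).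
    apply functional_extensionality; intros k; unfold seq_add, seq_scal; ring.
Qed.

Lemma PA_shift F f p : poly_app (RtoC 0 :: p) (Sop F) f = Sop F (poly_app p (Sop F) f).
Proof.
  simpl. apply functional_extensionality; intros k; unfold seq_add, seq_scal; ring.
Qed.

Definition cyc F f := cyclic_subspace (Sop F) f.

Lemma cyc_approx F f x : cyc F f x -> forall d, 0 < d ->
  exists p, N2 (seq_sub x (poly_app p (Sop F) f)) < d.
Proof.
  intros [Hx H] d Hd. destruct (H (sqrt d) (sqrt_lt_R0 _ Hd)) as [y [[p ->] Hy]].
  exists p. apply norm_lt1 in Hy. rewrite <- (sqrt_sqrt d) by lra. simpl in Hy. lra.
  apply sqrt_lt_R0; auto.
Qed.

Lemma mk_cyc F f x : H2 x -> (forall d, 0 < d ->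
  exists p, N2 (seq_sub x (poly_app p (Sop F) f)) < d) -> cyc F f x.
Proof.
  intros Hx H. split; auto. intros eps He.
  destruct (H (eps ^ 2)) as [p Hp]. apply pow_lt; auto.
  exists (poly_app p (Sop F) f). split. eexists; reflexivity.
  apply norm_lt2; auto.
Qed.

Lemma cyc_H2 F f x : cyc F f x -> H2 x.
Proof. intros [H _]; auto. Qed.

Lemma cyc_gen F f p : bounded_op F -> H2 f -> cyc F f (poly_app p (Sop F) f).
Proof.
  intros HF Hf. apply mk_cyc. apply PA_H2; auto. intros d Hd. exists p.
  replace (seq_sub (poly_app p (Sop F) f) (poly_app p (Sop F) f)) with seq0.
  rewrite N2_seq0; auto.
  apply functional_extensionality; intros k; unfold seq_sub, seq0; ring.
Qed.

Lemma cyc_add F f x y : bounded_op F -> H2 f -> cyc F f x -> cyc F f y -> cyc F f (seq_add x y).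
Proof.
  intros HF Hf Hx Hy. apply mk_cyc. apply H2_add; eapply cyc_H2; eauto.
  intros d Hd.
  destruct (cyc_approx F f x Hx (d/4)) as [p Hp]. lra.
  destruct (cyc_approx F f y Hy (d/4)) as [q Hq]. lra.
  exists (padd p q). rewrite <- PA_add by auto.
  destruct (H2_bound2 (seq_sub (seq_add x y) (seq_add (poly_app p (Sop F) f) (poly_app q (Sop F) f)))
    (seq_sub x (poly_app p (Sop F) f)) (seq_sub y (poly_app q (Sop F) f))) as [_ Hb].
  apply H2_sub; [eapply cyc_H2; eauto | apply PA_H2; auto].
  apply H2_sub; [eapply cyc_H2; eauto | apply PA_H2; auto].
  intros k. unfold seq_sub, seq_add.
  replace (x k + y k - (poly_app p (Sop F) f k + poly_app q (Sop F) f k))%C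
    with ((x k - poly_app p (Sop F) f k) + (y k - poly_app q (Sop F) f k))%C by ring.
  apply Cmod_triangle.
  lra.
Qed.

Lemma cyc_scal F f a x : bounded_op F -> H2 f -> cyc F f x -> cyc F f (seq_scal a x).
Proof.
  intros HF Hf Hx. apply mk_cyc. apply H2_scal; eapply cyc_H2; eauto.
  intros d Hd.
  pose proof (Cmod_ge_0 a).
  destruct (cyc_approx F f x Hx (d / (Cmod a ^ 2 + 1))) as [p Hp].
  apply Rdiv_lt_0_compat; auto. pose proof (pow2_ge_0 (Cmod a)); lra.
  exists (map (Cmult a) p). rewrite <- PA_scal by auto.
  destruct (H2_bound1 (seq_sub (seq_scal a x) (seq_scal a (poly_app p (Sop F) f)))
    (seq_sub x (poly_app p (Sop F) f)) (Cmod a)) as [_ Hb]; auto.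
  apply H2_sub; [eapply cyc_H2; eauto | apply PA_H2; auto].
  intros k. unfold seq_sub, seq_scal.
  replace (a * x k - a * poly_app p (Sop F) f k)%C with (a * (x k - poly_app p (Sop F) f k))%C by ring.
  rewrite Cmod_mult. lra.
  pose proof (pow2_ge_0 (Cmod a)). pose proof (N2_nonneg (seq_sub x (poly_app p (Sop F) f))).
  assert (Cmod a ^ 2 * N2 (seq_sub x (poly_app p (Sop F) f)) <= (Cmod a ^ 2 + 1) * N2 (seq_sub x (poly_app p (Sop F) f))) by nra.
  assert ((Cmod a ^ 2 + 1) * N2 (seq_sub x (poly_app p (Sop F) f)) < d).
  { apply Rmult_lt_compat_l with (r := Cmod a ^ 2 + 1) in Hp. 
    field_simplify in Hp. lra. lra. lra. }
  lra.
Qed.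

Lemma cyc_closed F f x : bounded_op F -> H2 f -> H2closure (cyc F f) x -> cyc F f x.
Proof.
  intros HF Hf [Hx H]. apply mk_cyc; auto. intros d Hd.
  destruct (H (sqrt (d/4))) as [y [Hy Hxy]]. apply sqrt_lt_R0; lra.
  apply norm_lt1 in Hxy; [|apply sqrt_lt_R0; lra].
  rewrite pow2_sqrt in Hxy by lra.
  destruct (cyc_approx F f y Hy (d/4)) as [p Hp]. lra.
  exists p.
  destruct (H2_bound2 (seq_sub x (poly_app p (Sop F) f)) (seq_sub x y) (seq_sub y (poly_app p (Sop F) f))) as [_ Hb].
  apply H2_sub; [auto | eapply cyc_H2; eauto].
  apply H2_sub; [eapply cyc_H2; eauto | apply PA_H2; auto].
  intros k. unfold seq_sub.
  replace (x k - poly_app p (Sop F) f k)%C with ((x k - y k) + (y k - poly_app p (Sop F) f k))%C by ring.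
  apply Cmod_triangle.
  lra.
Qed.

Lemma cyc_S F f x : bounded_op F -> H2 f -> cyc F f x -> cyc F f (Sop F x).
Proof.
  intros HF Hf Hx. pose proof (cyc_H2 _ _ _ Hx) as Hx2.
  apply mk_cyc. apply S_H2; auto. intros d Hd.
  destruct (S_N2 F HF) as [K [HK HSK]].
  destruct (cyc_approx F f x Hx (d / (K + 1))) as [p Hp].
  apply Rdiv_lt_0_compat; lra.
  exists (RtoC 0 :: p). rewrite PA_shift. rewrite <- S_sub by (auto using PA_H2).
  assert (H2s : H2 (seq_sub x (poly_app p (Sop F) f))) by (apply H2_sub; auto; apply PA_H2; auto).
  specialize (HSK _ H2s).
  pose proof (N2_nonneg (seq_sub x (poly_app p (Sop F) f))).
  assert ((K + 1) * N2 (seq_sub x (poly_app p (Sop F) f)) < d).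
  { apply Rmult_lt_compat_l with (r := K + 1) in Hp. 
    field_simplify in Hp. lra. lra. lra. }
  nra.
Qed.

Definition Zm (m : nat) (x : seqC) := forall k, (k < m)%nat -> x k = RtoC 0.

Lemma S_Z F m x : (forall m x, in_zmH2 m x -> in_zmCz (S m) (F x)) -> H2 x -> Zm m x ->
  Zm (S m) (Sop F x).
Proof.
  intros HP Hx Hz k Hk. unfold Sop, op_add, seq_add.
  destruct (HP m x (conj Hx Hz)) as [_ HF]. rewrite HF by auto.
  unfold Mz. destruct k. ring. rewrite Hz by lia. ring.
Qed.

Lemma F_kill n F x : n_perturbation n F -> H2 x -> Zm n x -> F x = seq0.
Proof.
  intros [HB [Hpow [HP _]]] Hx Hz.
  assert (Gen : forall d j x, (n <= j)%nat -> H2 x -> Zm j x -> forall k, (k <= j + d)%nat -> F x k = RtoC 0).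
  { induction d as [|d IH]; intros j y Hj Hy Hzy k Hk.
    - destruct (HP j y (conj Hy Hzy)) as [_ H]. apply H. lia.
    - set (y' := fun k => if Nat.eqb k j then RtoC 0 else y k).
      assert (Hy' : H2 y').
      { apply (H2_bound1 _ y 1); auto. lra. intros i. unfold y'. destruct (Nat.eqb i j).
        rewrite Cmod_0. pose proof (Cmod_ge_0 (y i)); lra. lra. }
      assert (E : y = seq_add (seq_scal (y j) (zpow j)) y').
      { apply functional_extensionality; intros i. unfold seq_add, seq_scal, zpow, y'.
        destruct (Nat.eqb i j) eqn:E. apply Nat.eqb_eq in E; subst; ring. ring. }
      destruct HB as [_ [Lin _]].
      rewrite E, Lin by (auto using H2_zpow). rewrite Hpow by auto.
      unfold seq_add, seq_scal, seq0. rewrite (IH (S j) y'); try lia; auto. ring.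
      intros i Hi. unfold y'. destruct (Nat.eqb i j) eqn:E2. auto. apply Hzy.
      apply Nat.eqb_neq in E2. lia. }
  apply functional_extensionality; intros k. apply (Gen k n x); auto; lia.
Qed.

Lemma S_inj F x : left_invertible (Sop F) -> H2 x -> Sop F x = seq0 -> x = seq0.
Proof.
  intros [L [HL HLS]] Hx E. rewrite <- (HLS x Hx). rewrite E. apply lin0; auto.
Qed.

Fixpoint pw (j : nat) : list C := match j with O => RtoC 1 :: nil | S j' => RtoC 0 :: pw j' end.

Lemma pw_props n F f j : n_perturbation n F -> H2 f -> f <> seq0 ->
  Zm j (poly_app (pw j) (Sop F) f) /\ poly_app (pw j) (Sop F) f <> seq0.
Proof.
  intros HN Hf Hf0. pose proof HN as [HB [_ [HP HLI]]].
  induction j as [|j [IHz IHn]].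
  - change (poly_app (pw 0) (Sop F) f) with (seq_add (seq_scal (RtoC 1) f) (Sop F seq0)).
    rewrite S0 by auto.
    replace (seq_add (seq_scal (RtoC 1) f) seq0) with f.
    split; auto. intros k Hk; lia.
    apply functional_extensionality; intros k; unfold seq_add, seq_scal, seq0; ring.
  - change (pw (S j)) with (RtoC 0 :: pw j). rewrite PA_shift.
    assert (H2 (poly_app (pw j) (Sop F) f)) by (apply PA_H2; auto).
    split. apply S_Z; auto.
    intros E. apply IHn. apply (S_inj F); auto.
Qed.

Theorem lemma2p4 (n : nat) (hn : (1 <= n)%nat) (F : seqC -> seqC)
  (hF : n_perturbation n F) (f : seqC) (hf : H2 f) (hf0 : f <> seq0) :
  exists M : seqC -> Prop,
    closed_subspace M /\
    (exists x, M x /\ x <> seq0) /\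
    (forall x, M x -> M (Mz x)) /\
    (forall x, M x -> cyclic_subspace (op_add Mz F) f x).
Proof.
  pose proof hF as [HB [_ [HP HLI]]].
  exists (fun x => cyc F f x /\ Zm n x).
  split; [|split; [|split]].
  - split; [|split; [|split; [|split]]].
    + intros x [Hx _]. eapply cyc_H2; eauto.
    + split. apply (cyc_gen F f nil); auto. intros k _. reflexivity.
    + intros x y [Hx Zx] [Hy Zy]. split. apply cyc_add; auto.
      intros k Hk. unfold seq_add. rewrite Zx, Zy by auto. ring.
    + intros a x [Hx Zx]. split. apply cyc_scal; auto.
      intros k Hk. unfold seq_scal. rewrite Zx by auto. ring.
    + intros x Hcl. pose proof Hcl as [Hx Happ]. split.
      * apply cyc_closed; auto. split; auto. intros eps He.
        destruct (Happ eps He) as [y [[Hy _] Hxy]]. eauto.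
      * intros k Hk. destruct (Ceq_dec (x k) (RtoC 0)) as [E|E]; [exact E|exfalso].
        assert (Hpos : 0 < Cmod (x k)) by (apply Cmod_gt_0; auto).
        destruct (Happ _ Hpos) as [y [[Hy Zy] Hxy]].
        apply norm_lt1 in Hxy; auto.
        pose proof (coord_le (seq_sub x y) k) as Hc.
        assert (H2 (seq_sub x y)) by (apply H2_sub; eauto using cyc_H2).
        specialize (Hc H). unfold seq_sub in Hc at 1. rewrite Zy in Hc by auto.
        replace (x k - RtoC 0)%C with (x k) in Hc by ring. lra.
  - exists (poly_app (pw n) (Sop F) f). destruct (pw_props n F f n hF hf hf0) as [Z N].
    split; [split; [apply cyc_gen; auto | exact Z] | exact N].
  - intros x [Hx Zx]. split.
    + assert (E : Mz x = Sop F x).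
      { unfold Sop, op_add. rewrite (F_kill n F x hF (cyc_H2 _ _ _ Hx) Zx).
        apply functional_extensionality; intros k; unfold seq_add, seq0; ring. }
      rewrite E. apply cyc_S; auto.
    + intros k Hk. unfold Mz. destruct k. reflexivity. apply Zx; lia.
  - intros x [Hx _]. exact Hx.
Qed.
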